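(* Let $R$ and $S$ be commutative rings with identity, $f:R\to S$ a ring homomorphism, and $J$ a nonzero proper ideal of $S$. Suppose that $\operatorname{Spec}(S)\setminus V(J)$ is compactly packed. Then for any family $\{\mathfrak{q}_\delta\}_{\delta\in\Delta}$ of elements of $\operatorname{Spec}(S)\setminus V(J)$, the subset $\{\overline{\mathfrak{q}_\delta}^f\}_{\delta\in\Delta}$ of $\operatorname{Spec}(R\bowtie^f J)$ is compactly packed.
   Context: $R\bowtie^f J:=\{(r,f(r)+j)\mid r\in R,\ j\in J\}$, a subring of $R\times S$. $V(J)$ is the set of prime ideals of $S$ containing $J$. For a prime ideal $\mathfrak{q}$ of $S$ with $J\not\subseteq\mathfrak{q}$, $\overline{\mathfrak{q}}^f:=\{(r,f(r)+j)\mid r\in R,\ j\in J,\ f(r)+j\in\mathfrak{q}\}$, which is a prime ideal of $R\bowtie^f J$. For a commutative ring $A$, a subset $X\subseteq\operatorname{Spec}(A)$ is compactly packed if whenever an ideal $I$ of $A$ is contained in the union of a family $\{\mathfrak{p}_i\}_i$ of elements of $X$, then $I\subseteq\mathfrak{p}_i$ for some $i$. *)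

(* Defs.v *)
From mathcomp Require Import all_boot all_algebra.
Set Implicit Arguments. Unset Strict Implicit. Unset Printing Implicit Defensive.
Import GRing.Theory.
Local Open Scope ring_scope.

Definition is_ideal (S : comNzRingType) (I : S -> Prop) : Prop :=
  I 0 /\ (forall x y, I x -> I y -> I (x - y)) /\ (forall s x, I x -> I (s * x)).

Definition is_prime_ideal (S : comNzRingType) (q : S -> Prop) : Prop :=
  is_ideal q /\ ~ q 1 /\ (forall a b, q (a * b) -> q a \/ q b).

Definition amalg (R S : comNzRingType) (f : {rmorphism R -> S}) (J : S -> Prop)
  : R * S -> Prop :=
  fun p => exists r j, J j /\ p = (r, f r + j).

Definition is_sub_ideal (T : comNzRingType) (A : T -> Prop) (I : T -> Prop) : Prop :=
  (forall x, I x -> A x) /\ I 0 /\ (forall x y, I x -> I y -> I (x - y)) /\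
  (forall a x, A a -> I x -> I (a * x)).

Definition is_sub_prime (T : comNzRingType) (A : T -> Prop) (P : T -> Prop) : Prop :=
  is_sub_ideal A P /\ ~ P 1 /\
  (forall a b, A a -> A b -> P (a * b) -> P a \/ P b).

Definition compactly_packed_in (T : comNzRingType) (A : T -> Prop)
  (X : (T -> Prop) -> Prop) : Prop :=
  forall (I : T -> Prop), is_sub_ideal A I ->
  forall (Idx : Type) (P : Idx -> T -> Prop), (forall i, X (P i)) ->
  (forall x, I x -> exists i, P i x) -> exists i, forall x, I x -> P i x.

Definition compactly_packed (S : comNzRingType) (X : (S -> Prop) -> Prop) : Prop :=
  @compactly_packed_in S (fun _ => True) X.

Definition spec_minus_V (S : comNzRingType) (J : S -> Prop) : (S -> Prop) -> Prop :=
  fun q => is_prime_ideal q /\ ~ (forall x, J x -> q x).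

Definition qbar (R S : comNzRingType) (f : {rmorphism R -> S}) (J : S -> Prop)
  (q : S -> Prop) : R * S -> Prop :=
  fun p => exists r j, J j /\ q (f r + j) /\ p = (r, f r + j).

(* Main.v *)
Require Import Defs.
From mathcomp Require Import all_boot all_algebra.
From Stdlib Require Import Classical.
Local Open Scope ring_scope.
Import GRing.Theory.

Theorem proposition4p5 (R S : comNzRingType) (f : {rmorphism R -> S})
  (J : S -> Prop) (HJ : is_ideal J) (HJ0 : exists x, J x /\ x != 0) (HJ1 : ~ J 1)
  (Hcp : compactly_packed (spec_minus_V J))
  (Delta : Type) (q : Delta -> S -> Prop) (Hq : forall d, spec_minus_V J (q d)) :
  compactly_packed_in (amalg f J) (fun P => exists d, P = qbar f J (q d)).
Proof.
move=> I [IA [I0 [IB IM]]] Idx P HP Hcov.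
have [J0 [JB JM]] := HJ.
pose D := {d : Delta | exists i, P i = qbar f J (q d)}.
pose Q := fun d : D => q (proj1_sig d).
have HQ : forall d : D, spec_minus_V J (Q d) by move=> d; exact: Hq.
have A0 : forall j, J j -> amalg f J (0, j).
  by move=> j Jj; exists 0, j; split => //; rewrite rmorph0 add0r.
pose K := fun x : S => forall j, J j -> I (0, j * x).
have cov0 : forall y, I (0, y) -> exists d : D, Q d y.
  move=> y Iy; have [i Pi] := Hcov _ Iy.
  have [d Ed] := HP i.
  have := Pi; rewrite Ed => -[r [j' [Jj' [qd E]]]].
  case: E => _ E2.
  by exists (exist _ d (ex_intro _ i Ed)); rewrite /Q /= E2.
have Kcov : forall x, K x -> exists d : D, Q d x.
  move=> x Kx.
  pose Jx := fun y : S => exists j, J j /\ y = j * x.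
  have HJx : is_sub_ideal (fun _ => True) Jx.
    split => //; split; first by exists 0; rewrite mul0r.
    split.
      move=> _ _ [a [Ja ->]] [b [Jb ->]]; exists (a - b); split; first exact: JB.
      by rewrite mulrBl.
    move=> a _ _ [b [Jb ->]]; exists (a * b); split; first exact: JM.
    by rewrite mulrA.
  have cJx : forall y, Jx y -> exists d : D, Q d y.
    by move=> y [j [Jj ->]]; apply: cov0; apply: Kx.
  have [d0 Hd0] := Hcp Jx HJx D Q HQ cJx.
  have [[_ [_ Hpr]] Hn] := HQ d0.
  have [y Hy] := not_all_ex_not _ _ Hn.
  have [Jy nq] := imply_to_and _ _ Hy.
  exists d0; have := Hd0 (y * x) (ex_intro _ y (conj Jy erefl)).
  by case/Hpr => // /nq.
have HK : is_sub_ideal (fun _ => True) K.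
  split => //; split.
    by move=> j Jj; rewrite mulr0.
  split.
    move=> a b Ka Kb j Jj; rewrite mulrBr.
    have := IB _ _ (Ka j Jj) (Kb j Jj).
    suff -> : ((0 : R, j * a) - (0, j * b) : R * S) = (0, j * a - j * b) by [].
    by apply: injective_projections; rewrite /= ?subr0.
  move=> a x _ Kx j Jj; rewrite mulrA.
  have Jja : J (j * a) by rewrite mulrC; apply: JM.
  exact: Kx _ Jja.
have [[d1 [i Ei]] Hd1] := Hcp K HK D Q HQ Kcov.
exists i; rewrite Ei => -[r s] Irs.
have [r' [j [Jj E]]] := IA _ Irs.
case: E => E1 E2; subst r' s.
exists r, j; split => //; split => //.
apply: (Hd1 (f r + j)) => j' Jj'.
have := IM _ _ (A0 _ Jj') Irs.
suff -> : ((0 : R, j') * (r, f r + j) : R * S) = (0, j' * (f r + j)) by [].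
by apply: injective_projections; rewrite /= ?mul0r.
Qed.
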